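(* Let $\mathcal{U}=\{u_1,\ldots,u_M\}\subset\mathbb{R}\setminus\{0\}$ and $k\ge1$. For $i\in\{1,\ldots,k\}$ let $f_i:\mathbb{R}\to[0,\infty)$ satisfy $f_i(0)\le\sum_{m=1}^Mf_i(u_m)$. Then for integers $0\le w<w'\le k$, $$\sum_{x\in\mathcal{X}_w^k(\mathcal{U})}\prod_{i=1}^kf_i(x_i)\le\big\lceil L^k_{w,w'}\big\rceil\sum_{x'\in\mathcal{X}_{w'}^k(\mathcal{U})}\prod_{i=1}^kf_i(x'_i),\qquad L^k_{w,w'}=\prod_{i=0}^{w'-w-1}\frac{w'-i}{k-w-i}.$$
   Context: $\mathcal{X}_s^k(\mathcal{U})$ is the set of vectors in $\mathbb{R}^k$ with exactly $s$ nonzero entries, each belonging to $\mathcal{U}$. *)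

(* Defs.v *)
From HB Require Import structures.
From mathcomp Require Import all_boot all_order all_algebra.
Set Implicit Arguments. Unset Strict Implicit. Unset Printing Implicit Defensive.
Import Order.TTheory GRing.Theory Num.Theory.
Local Open Scope ring_scope.

Definition inX (R : numDomainType) (u : seq R) (k s : nat) (x : 'rV[R]_k) : bool :=
  (#|[set i : 'I_k | x 0 i != 0]| == s) &&
  [forall i : 'I_k, (x 0 i != 0) ==> (x 0 i \in u)].

(* Every vector of X_s^k(U) has entries in 0 :: u, so X_s^k(U) is the finite
   set obtained by filtering all such vectors by inX (duplicates removed). *)
Definition vec_of (R : numDomainType) (u : seq R) (k : nat)
  (g : {ffun 'I_k -> 'I_(size u).+1}) : 'rV[R]_k :=
  \row_(i < k) nth 0 (0 :: u) (g i).

Definition Xset (R : numDomainType) (u : seq R) (k s : nat) : seq 'rV[R]_k :=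
  undup [seq x <- map (@vec_of R u k) (enum {ffun 'I_k -> 'I_(size u).+1}) | inX u s x].

Definition Lkw (R : numFieldType) (k w w' : nat) : R :=
  \prod_(i < w' - w) ((w' - i)%:R / (k - w - i)%:R).

(* Main.v *)
Require Import Defs.
From HB Require Import structures.
From mathcomp Require Import all_boot all_order all_algebra.
From mathcomp Require Import zify ring.
Import Order.TTheory GRing.Theory Num.Theory.
Local Open Scope ring_scope.

Lemma nz (R : numDomainType) (u : seq R) (j : 'I_(size u).+1) :
  0 \notin u -> (nth 0 (0 :: u) j != 0) = (j != ord0).
Proof.
move=> u0; case: j => [[|j] hj] //=; first by rewrite eqxx.
have hj' : (j < size u)%N by [].
have := mem_nth 0 hj'; case: eqP => // -> h; by rewrite h in u0.
Qed.

Lemma vec_inj (R : numDomainType) (u : seq R) k :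
  uniq u -> 0 \notin u -> injective (@vec_of R u k).
Proof.
move=> uu u0 g1 g2 /rowP h; apply/ffunP => i; have := h i; rewrite !mxE => /eqP.
rewrite nth_uniq //=; first by move/eqP/val_inj.
by rewrite u0 uu.
Qed.

Lemma inX_vec (R : numDomainType) (u : seq R) k s g :
  0 \notin u -> inX u s (@vec_of R u k g) = (#|[set i | g i != ord0]| == s).
Proof.
move=> u0; rewrite /inX.
have -> : [forall i, (@vec_of R u k g 0 i != 0) ==> (@vec_of R u k g 0 i \in u)].
  apply/forallP => i; rewrite mxE; apply/implyP.
  case: (g i) => [[|j] hj] //=; first by rewrite eqxx.
  by move=> _; apply: mem_nth.
rewrite andbT; congr (_ == _); apply: eq_card => i; rewrite !inE mxE nz //.
Qed.
Definition PT {R : numDomainType} {k} (a b : 'I_k -> R) (T : {set 'I_k}) : R :=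
  \prod_(i < k) (if i \in T then b i else a i).

Lemma PT_ge0 (R : numDomainType) k (a b : 'I_k -> R) (T : {set 'I_k}) :
  (forall i, 0 <= a i) -> (forall i, a i <= b i) -> 0 <= PT a b T.
Proof.
move=> a0 ab; apply: prodr_ge0 => i _; case: (i \in T) => //.
exact: le_trans (a0 i) (ab i).
Qed.

Lemma PT_mono (R : numDomainType) k (a b : 'I_k -> R) (T T' : {set 'I_k}) :
  (forall i, 0 <= a i) -> (forall i, a i <= b i) -> T \subset T' ->
  PT a b T <= PT a b T'.
Proof.
move=> a0 ab sTT'; apply: ler_prod => i _.
have b0 := le_trans (a0 i) (ab i).
case: ifP => iT; first by rewrite (subsetP sTT' i iT) b0 lexx.
by case: ifP => _; rewrite a0 ?ab ?lexx.
Qed.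

Lemma card_super k (T : {set 'I_k}) w' : (#|T| <= w' <= k)%N ->
  #|[set T' : {set 'I_k} | (T \subset T') && (#|T'| == w')]| = 'C(k - #|T|, w' - #|T|).
Proof.
move=> /andP[h1 h2].
have -> : [set T' : {set 'I_k} | (T \subset T') && (#|T'| == w')] =
   (@setC _) @^-1: [set A : {set 'I_k} | A \subset ~: T & #|A| == (k - w')%N].
  apply/setP => X; rewrite !inE setCS.
  have := cardsC X; rewrite card_ord => hX.
  congr (_ && _); apply/eqP/eqP; lia.
rewrite card_preimset; last exact: setC_inj.
rewrite cards_draws.
have := cardsC T; rewrite card_ord => hT.
have -> : #|~: T| = (k - #|T|)%N by lia.
have -> : (k - w' = (k - #|T|) - (w' - #|T|))%N by lia.
by rewrite bin_sub //; lia.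
Qed.

Lemma card_sub k (T' : {set 'I_k}) w :
  #|[set T : {set 'I_k} | (#|T| == w) && (T \subset T')]| = 'C(#|T'|, w).
Proof.
by rewrite -cards_draws; apply: eq_card => X; rewrite !inE andbC.
Qed.

Lemma comb (R : numDomainType) k (a b : 'I_k -> R) w w' :
  (forall i, 0 <= a i) -> (forall i, a i <= b i) -> (w <= w')%N -> (w' <= k)%N ->
  'C(k - w, w' - w)%:R * \sum_(T : {set 'I_k} | #|T| == w) PT a b T
  <= 'C(w', w)%:R * \sum_(T : {set 'I_k} | #|T| == w') PT a b T.
Proof.
move=> a0 ab ww' w'k.
rewrite !mulr_sumr.
apply: (@le_trans _ _ (\sum_(T : {set 'I_k} | #|T| == w)
     \sum_(T' : {set 'I_k} | (T \subset T') && (#|T'| == w')) PT a b T')).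
  apply: ler_sum => T /eqP hT.
  apply: (@le_trans _ _ (\sum_(T' : {set 'I_k} | (T \subset T') && (#|T'| == w')) PT a b T)).
    rewrite (eq_bigl (fun X => X \in [set T' : {set 'I_k} | (T \subset T') && (#|T'| == w')])); last first.
      by move=> X; rewrite inE.
    rewrite sumr_const card_super hT; first by rewrite mulr_natl.
    by apply/andP; split; lia.
  apply: ler_sum => T' /andP[sT _]; exact: PT_mono.
rewrite (exchange_big_dep (fun T' : {set 'I_k} => #|T'| == w')) /=; last first.
  by move=> T T' _ /andP[].
apply: ler_sum => T'. move=> /eqP hT'.
rewrite (eq_bigl (fun X => X \in [set T : {set 'I_k} | (#|T| == w) && (T \subset T')])); last first.
  by move=> X; rewrite inE hT' eqxx andbT.
by rewrite sumr_const card_sub hT' mulr_natl.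
Qed.

Lemma expand (R : numDomainType) (u : seq R) k (f : 'I_k -> R -> R) s :
  uniq u -> 0 \notin u ->
  \sum_(x <- Xset u k s) \prod_(i < k) f i (x 0 i) =
  \sum_(T : {set 'I_k} | #|T| == s) PT (fun i => f i 0) (fun i => \sum_(m <- u) f i m) T.
Proof.
move=> uu u0.
rewrite /Xset filter_map undup_id; last first.
  by rewrite (map_inj_uniq (@vec_inj R u k uu u0)) filter_uniq // enum_uniq.
rewrite big_map big_filter big_enum_cond /=.
under eq_bigl => g do rewrite inX_vec //.
under eq_bigr => g _ do under eq_bigr => i _ do rewrite mxE.
rewrite (partition_big (fun g : {ffun 'I_k -> 'I_(size u).+1} => [set i | g i != ord0])
   (fun T : {set 'I_k} => #|T| == s)) //=.
apply: eq_bigr => T /eqP hT.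
rewrite (eq_bigl (fun g => g \in family (fun i j => (j != ord0) == (i \in T)))); last first.
  move=> g; rewrite -hT.
  apply/idP/familyP.
    by move=> /andP[_ /eqP <-] i; rewrite -topredE /= inE eqxx.
  move=> h; have E : [set i | g i != ord0] = T.
    by apply/setP => i; rewrite inE; have := h i; rewrite -topredE /= => /eqP.
  by rewrite E !eqxx.
rewrite -(bigA_distr_big_dep _ (fun (i : 'I_k) (j : 'I_(size u).+1) => f i (nth 0 (0 :: u) j))).
rewrite /PT; apply: eq_bigr => i _.
case: ifP => iT /=.
  rewrite big_mkcond big_ord_recl /= add0r (big_nth 0) big_mkord.
  by apply: eq_bigr => j _ /=; rewrite add0n.
rewrite (big_pred1 ord0) // => j /=; by case: (j =P ord0).
Qed.

Lemma L_eq (R : numFieldType) k w w' : (w <= w')%N -> (w' <= k)%N ->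
  Lkw R k w w' = 'C(w', w)%:R / 'C(k - w, w' - w)%:R.
Proof.
move=> ww' w'k.
rewrite /Lkw prodf_div -!natr_prod -!ffact_prod -!bin_ffact !natrM bin_sub //.
have h1 : ('C(k - w, w' - w)%:R : R) != 0.
  by rewrite pnatr_eq0 -lt0n bin_gt0; lia.
have h2 : ((w' - w)`!%:R : R) != 0 by rewrite pnatr_eq0 -lt0n fact_gt0.
by rewrite invfM mulrACA divff // mulr1.
Qed.

Theorem lemma8 (R : archiRealFieldType) (u : seq R) (k : nat)
  (f : 'I_k -> R -> R) (w w' : nat) :
  uniq u -> 0 \notin u -> (1 <= k)%N ->
  (forall i x, 0 <= f i x) ->
  (forall i, f i 0 <= \sum_(m <- u) f i m) ->
  (w < w')%N -> (w' <= k)%N ->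
  \sum_(x <- Xset u k w) \prod_(i < k) f i (x 0 i)
    <= (Num.ceil (Lkw R k w w'))%:~R * \sum_(x <- Xset u k w') \prod_(i < k) f i (x 0 i).
Proof.
move=> uu u0 k1 f0 fu ww' w'k.
rewrite !expand //.
set a := fun i => f i 0.
set b := fun i => \sum_(m <- u) f i m.
have a0 : forall i, 0 <= a i by move=> i; exact: f0.
have ab : forall i, a i <= b i by move=> i; exact: fu.
have H := @comb R k a b w w' a0 ab (ltnW ww') w'k.
set Sw := \sum_(T : {set 'I_k} | #|T| == w) PT a b T in H *.
set Sw' := \sum_(T : {set 'I_k} | #|T| == w') PT a b T in H *.
have S0 : 0 <= Sw' by apply: sumr_ge0 => T _; exact: (@PT_ge0 R k a b T a0 ab).
have C1 : (0 : R) < 'C(k - w, w' - w)%:R by rewrite ltr0n bin_gt0; lia.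
apply: (@le_trans _ _ (Lkw R k w w' * Sw')); last first.
  by apply: ler_wpM2r => //; exact: ceil_ge.
rewrite L_eq; [|lia|lia].
by rewrite mulrAC ler_pdivlMr // mulrC.
Qed.
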